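(* The set $M = \{z = 0,\ p_z = 0,\ p_\theta = 0\}$ (with $p_\theta = x p_y - y p_x$) is invariant under the Hamiltonian flow of the Kepler–Heisenberg Hamiltonian $H$. Along any solution in $M$ with energy $h$, the function $r(t) = \sqrt{x(t)^2+y(t)^2}$ satisfies that the graph $\{(t, r(t))\}$ lies on a conic in the $(t,r)$-plane which is a hyperbola if $h>0$, an ellipse if $h<0$, and a parabola if $h=0$.
   Context: Phase space is $T^*\mathbb R^3$ with coordinates $(x,y,z,p_x,p_y,p_z)$. Set $P_X = p_x - \tfrac12 y p_z$, $P_Y = p_y + \tfrac12 x p_z$. The Kepler–Heisenberg Hamiltonian is $H = \tfrac12(P_X^2 + P_Y^2) - \frac{1}{8\pi\sqrt{(x^2+y^2)^2+16z^2}}$, defined away from $x=y=z=0$. *)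

(* Defs.v *)
From Stdlib Require Import Reals Lra.
From Coquelicot Require Import Coquelicot.
Open Scope R_scope.

Record state := mkState { sx : R; sy : R; sz : R; spx : R; spy : R; spz : R }.

Definition PX (s : state) : R := spx s - / 2 * sy s * spz s.
Definition PY (s : state) : R := spy s + / 2 * sx s * spz s.

(* Kepler--Heisenberg Hamiltonian (meaningful away from x = y = z = 0). *)
Definition KH (s : state) : R :=
  / 2 * (PX s ^ 2 + PY s ^ 2)
  - / (8 * PI * sqrt ((sx s ^ 2 + sy s ^ 2) ^ 2 + 16 * sz s ^ 2)).

Definition away_from_origin (s : state) : Prop :=
  ~ (sx s = 0 /\ sy s = 0 /\ sz s = 0).

Definition dH_dx  (s : state) : R := Derive (fun u => KH (mkState u (sy s) (sz s) (spx s) (spy s) (spz s))) (sx s).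
Definition dH_dy  (s : state) : R := Derive (fun u => KH (mkState (sx s) u (sz s) (spx s) (spy s) (spz s))) (sy s).
Definition dH_dz  (s : state) : R := Derive (fun u => KH (mkState (sx s) (sy s) u (spx s) (spy s) (spz s))) (sz s).
Definition dH_dpx (s : state) : R := Derive (fun u => KH (mkState (sx s) (sy s) (sz s) u (spy s) (spz s))) (spx s).
Definition dH_dpy (s : state) : R := Derive (fun u => KH (mkState (sx s) (sy s) (sz s) (spx s) u (spz s))) (spy s).
Definition dH_dpz (s : state) : R := Derive (fun u => KH (mkState (sx s) (sy s) (sz s) (spx s) (spy s) u)) (spz s).

Definition in_interval (a b : Rbar) (t : R) : Prop := Rbar_lt a t /\ Rbar_lt t b.

Definition is_KH_solution (a b : Rbar) (gamma : R -> state) : Prop :=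
  Rbar_lt a b /\
  forall t, in_interval a b t ->
    away_from_origin (gamma t) /\
    is_derive (fun u => sx (gamma u)) t (dH_dpx (gamma t)) /\
    is_derive (fun u => sy (gamma u)) t (dH_dpy (gamma t)) /\
    is_derive (fun u => sz (gamma u)) t (dH_dpz (gamma t)) /\
    is_derive (fun u => spx (gamma u)) t (- dH_dx (gamma t)) /\
    is_derive (fun u => spy (gamma u)) t (- dH_dy (gamma t)) /\
    is_derive (fun u => spz (gamma u)) t (- dH_dz (gamma t)).

Definition p_theta (s : state) : R := sx s * spy s - sy s * spx s.

Definition in_M (s : state) : Prop := sz s = 0 /\ spz s = 0 /\ p_theta s = 0.

Record conic := mkConic { cA : R; cB : R; cC : R; cD : R; cE : R; cF : R }.

Definition conic_eval (Q : conic) (t r : R) : R :=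
  cA Q * t ^ 2 + cB Q * t * r + cC Q * r ^ 2 + cD Q * t + cE Q * r + cF Q.

(* Determinant of the symmetric 3x3 matrix
   [[A, B/2, D/2], [B/2, C, E/2], [D/2, E/2, F]]; nonzero iff nondegenerate. *)
Definition conic_det (Q : conic) : R :=
  let A := cA Q in let B := cB Q / 2 in let C := cC Q in
  let D := cD Q / 2 in let E := cE Q / 2 in let F := cF Q in
  A * (C * F - E * E) - B * (B * F - E * D) + D * (B * E - C * D).

Definition conic_disc (Q : conic) : R := cB Q ^ 2 - 4 * cA Q * cC Q.

Definition is_hyperbola (Q : conic) : Prop := conic_det Q <> 0 /\ conic_disc Q > 0.
Definition is_parabola  (Q : conic) : Prop := conic_det Q <> 0 /\ conic_disc Q = 0.
(* A real ellipse: nondegenerate, negative discriminant, and nonempty. *)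
Definition is_ellipse   (Q : conic) : Prop :=
  conic_det Q <> 0 /\ conic_disc Q < 0 /\ exists t r, conic_eval Q t r = 0.

(* Main.v *)
Require Import Defs.
From Stdlib Require Import Reals Lra.
From Coquelicot Require Import Coquelicot.
Open Scope R_scope.

Definition SS (s : state) := (sx s ^ 2 + sy s ^ 2) ^ 2 + 16 * sz s ^ 2.

Ltac fixsq s :=
  repeat match goal with |- context [sqrt ?A] =>
    match A with SS s => fail 1 | _ => replace A with (SS s) by (unfold SS; ring) end end.

Ltac solve_d s Hs :=
  assert (HQ : 0 < sqrt (SS s)) by (apply sqrt_lt_R0; exact Hs);
  assert (HPI := PI_RGT_0);
  apply is_derive_unique; unfold KH, PX, PY; simpl;
  fixsq s; auto_derive;
  [ fixsq s; repeat split;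
    try (apply Rmult_integral_contrapositive; split; lra);
    try exact Hs
  | fixsq s; field; split; lra ].

Lemma dHx (s : state) : 0 < SS s ->
  dH_dx s = PY s * spz s / 2 + sx s * (sx s ^ 2 + sy s ^ 2) / (4 * PI * sqrt (SS s) ^ 3).
Proof. intros Hs. unfold dH_dx. unfold PY. solve_d s Hs. Qed.
Lemma dHy (s : state) : 0 < SS s ->
  dH_dy s = - PX s * spz s / 2 + sy s * (sx s ^ 2 + sy s ^ 2) / (4 * PI * sqrt (SS s) ^ 3).
Proof. intros Hs. unfold dH_dy. unfold PX. solve_d s Hs. Qed.
Lemma dHz (s : state) : 0 < SS s ->
  dH_dz s = 2 * sz s / (PI * sqrt (SS s) ^ 3).
Proof. intros Hs. unfold dH_dz. solve_d s Hs. Qed.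
Lemma dHpx (s : state) : 0 < SS s -> dH_dpx s = PX s.
Proof. intros Hs. unfold dH_dpx. unfold PX. solve_d s Hs. Qed.
Lemma dHpy (s : state) : 0 < SS s -> dH_dpy s = PY s.
Proof. intros Hs. unfold dH_dpy. unfold PY. solve_d s Hs. Qed.
Lemma dHpz (s : state) : 0 < SS s -> dH_dpz s = (sx s * PY s - sy s * PX s) / 2.
Proof. intros Hs. unfold dH_dpz. unfold PX, PY. solve_d s Hs. Qed.
Lemma interval_convex a b t1 t2 u : in_interval a b t1 -> in_interval a b t2 ->
  t1 <= u <= t2 -> in_interval a b u.
Proof.
  unfold in_interval; destruct a as [a| |], b as [b| |]; simpl; intros; lra.
Qed.

Lemma interval_ne a b : Rbar_lt a b -> exists t, in_interval a b t.
Proof.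
  unfold in_interval; destruct a as [a| |], b as [b| |]; simpl; intros H; try tauto.
  - exists ((a+b)/2); simpl; lra.
  - exists (a+1); simpl; lra.
  - exists (b-1); simpl; lra.
  - exists 0; simpl; tauto.
Qed.

Lemma cont_of_der f u l : is_derive f u l -> continuity_pt f u.
Proof.
  intros H. apply derivable_continuous_pt. exists l. now apply is_derive_Reals.
Qed.

Lemma const_on a b (f : R -> R) : (forall u, in_interval a b u -> is_derive f u 0) ->
  forall t1 t2, in_interval a b t1 -> in_interval a b t2 -> f t2 = f t1.
Proof.
  intros Hd t1 t2 H1 H2.
  assert (Hin : forall u, Rmin t1 t2 <= u <= Rmax t1 t2 -> in_interval a b u).
  { intros u Hu. unfold Rmin, Rmax in Hu. destruct (Rle_dec t1 t2).
    - apply (interval_convex a b t1 t2); auto.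
    - apply (interval_convex a b t2 t1); auto; lra. }
  destruct (MVT_gen f t1 t2 (fun _ => 0)) as [c [_ Hc]].
  - intros x Hx. apply Hd, Hin; lra.
  - intros x Hx. apply (cont_of_der f x 0), Hd, Hin; lra.
  - lra.
Qed.

Lemma gron (E dE : R -> R) (K t1 t2 : R) : t1 <= t2 ->
  (forall u, t1 <= u <= t2 -> is_derive E u (dE u)) ->
  (forall u, t1 <= u <= t2 -> 0 <= E u /\ Rabs (dE u) <= K * E u) ->
  (E t1 = 0 -> E t2 = 0) /\ (E t2 = 0 -> E t1 = 0).
Proof.
  intros H12 Hd Hb.
  assert (Hmin : Rmin t1 t2 = t1) by (apply Rmin_left; lra).
  assert (Hmax : Rmax t1 t2 = t2) by (apply Rmax_right; lra).
  assert (HdF : forall u, t1 <= u <= t2 -> is_derive (fun v => E v * exp (- K * v)) u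
            ((dE u - K * E u) * exp (- K * u))).
  { intros u Hu. auto_derive.
    - exists (dE u); apply Hd; exact Hu.
    - replace (Derive (fun x => E x) u) with (dE u) by (symmetry; apply is_derive_unique; apply Hd; exact Hu). ring. }
  assert (HdG : forall u, t1 <= u <= t2 -> is_derive (fun v => E v * exp (K * v)) u
            ((dE u + K * E u) * exp (K * u))).
  { intros u Hu. auto_derive.
    - exists (dE u); apply Hd; exact Hu.
    - replace (Derive (fun x => E x) u) with (dE u) by (symmetry; apply is_derive_unique; apply Hd; exact Hu). ring. }
  split; intros H0.
  - destruct (MVT_gen (fun v => E v * exp (- K * v)) t1 t2 (fun u => (dE u - K * E u) * exp (- K * u))) as [c [Hc Hc2]].
    + intros x Hx. apply HdF; rewrite Hmin, Hmax in Hx; lra.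
    + intros x Hx. eapply cont_of_der, HdF; rewrite Hmin, Hmax in Hx; lra.
    + rewrite Hmin, Hmax in Hc. simpl in Hc2. rewrite H0 in Hc2.
      destruct (Hb c Hc) as [Hp Hq]. destruct (Hb t2 ltac:(lra)) as [Hp2 _].
      assert (Hneg : (dE c - K * E c) <= 0) by (apply Rabs_le_between in Hq; lra).
      assert (He := exp_pos (- K * c)). assert (He2 := exp_pos (- K * t2)).
      assert (P1 : (dE c - K * E c) * exp (- K * c) <= 0) by nra.
      assert (E t2 * exp (- K * t2) <= 0) by (rewrite Rmult_0_l, Rminus_0_r in Hc2; rewrite Hc2; nra). nra.
  - destruct (MVT_gen (fun v => E v * exp (K * v)) t1 t2 (fun u => (dE u + K * E u) * exp (K * u))) as [c [Hc Hc2]].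
    + intros x Hx. apply HdG; rewrite Hmin, Hmax in Hx; lra.
    + intros x Hx. eapply cont_of_der, HdG; rewrite Hmin, Hmax in Hx; lra.
    + rewrite Hmin, Hmax in Hc. simpl in Hc2. rewrite H0 in Hc2.
      destruct (Hb c Hc) as [Hp Hq]. destruct (Hb t1 ltac:(lra)) as [Hp1 _].
      assert (Hpos : 0 <= (dE c + K * E c)) by (apply Rabs_le_between in Hq; lra).
      assert (He := exp_pos (K * c)). assert (He1 := exp_pos (K * t1)).
      assert (P1 : 0 <= (dE c + K * E c) * exp (K * c)) by nra.
      assert (E t1 * exp (K * t1) <= 0) by (rewrite Rmult_0_l in Hc2; nra). nra.
Qed.

Lemma away_SS s : away_from_origin s -> 0 < SS s.
Proof.
  intros H. unfold SS. destruct (Rlt_or_le 0 (sz s ^ 2)) as [Hz|Hz].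
  - assert (0 <= (sx s ^ 2 + sy s ^ 2) ^ 2) by (apply pow2_ge_0). lra.
  - assert (Hz0 : sz s = 0) by nra.
    destruct (Rlt_or_le 0 (sx s ^ 2 + sy s ^ 2)) as [Hr|Hr].
    + assert (0 < (sx s ^ 2 + sy s ^ 2) ^ 2) by (apply pow_lt; lra). nra.
    + exfalso. apply H. repeat split; nra.
Qed.

Lemma Deta (f : R -> R) x l : is_derive f x l -> Derive (fun y => f y) x = l.
Proof. intros H. now apply is_derive_unique. Qed.
Ltac rwD := repeat match goal with H : is_derive ?f ?x ?l |- context [Derive (fun y => ?f y) ?x] =>
   rewrite (Deta f x l H) end.

Lemma G_J (X Y A B : R -> R) t dX dY dA dB :
  is_derive X t dX -> is_derive Y t dY -> is_derive A t dA -> is_derive B t dB ->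
  is_derive (fun u => X u * A u + Y u * B u) t (dX * A t + X t * dA + (dY * B t + Y t * dB)).
Proof.
  intros HX HY HA HB. auto_derive.
  - repeat split; eexists; eassumption.
  - rwD. ring.
Qed.
Lemma G_pt (X Y A B : R -> R) t dX dY dA dB :
  is_derive X t dX -> is_derive Y t dY -> is_derive A t dA -> is_derive B t dB ->
  is_derive (fun u => X u * B u - Y u * A u) t (dX * B t + X t * dB - (dY * A t + Y t * dA)).
Proof.
  intros HX HY HA HB. auto_derive.
  - repeat split; eexists; eassumption.
  - rwD. ring.
Qed.
Lemma G_sq (X Y : R -> R) t dX dY :
  is_derive X t dX -> is_derive Y t dY ->
  is_derive (fun u => X u ^ 2 + Y u ^ 2) t (2 * X t * dX + 2 * Y t * dY).
Proof.
  intros HX HY. auto_derive.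
  - repeat split; eexists; eassumption.
  - rwD. ring.
Qed.
Lemma G_k (X Y Z : R -> R) t dX dY dZ :
  is_derive X t dX -> is_derive Y t dY -> is_derive Z t dZ ->
  0 < (X t ^ 2 + Y t ^ 2) ^ 2 + 16 * Z t ^ 2 ->
  ex_derive (fun u => (X u ^ 2 + Y u ^ 2) / 2 + 4 / (PI * sqrt ((X u ^ 2 + Y u ^ 2) ^ 2 + 16 * Z u ^ 2) ^ 3)) t.
Proof.
  intros HX HY HZ Hs. assert (HQ := sqrt_lt_R0 _ Hs). assert (HPI := PI_RGT_0). auto_derive.
  repeat split; try (eexists; eassumption).
  - replace ((X t * (X t * 1) + Y t * (Y t * 1)) * ((X t * (X t * 1) + Y t * (Y t * 1)) * 1) + 16 * (Z t * (Z t * 1))) with ((X t ^ 2 + Y t ^ 2) ^ 2 + 16 * Z t ^ 2) by ring. exact Hs.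
  - replace ((X t * (X t * 1) + Y t * (Y t * 1)) * ((X t * (X t * 1) + Y t * (Y t * 1)) * 1) + 16 * (Z t * (Z t * 1))) with ((X t ^ 2 + Y t ^ 2) ^ 2 + 16 * Z t ^ 2) by ring.
    set (Q := sqrt _) in *.
    rewrite Rmult_1_r; apply Rgt_not_eq; apply Rmult_lt_0_compat; [exact HPI| apply Rmult_lt_0_compat; [exact HQ | apply Rmult_lt_0_compat; exact HQ]].
Qed.

Lemma is_derive_eqv (f : R -> R) t l r : is_derive f t l -> l = r -> is_derive f t r.
Proof. intros H ->. exact H. Qed.

Lemma bnd z p gg k K : 0 <= k -> -k <= gg <= k -> k <= K ->
  Rabs (z * p * gg) <= K * (z ^ 2 + p ^ 2).
Proof.
  intros Hk Hg HK. rewrite Rabs_mult.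
  assert (H1 : Rabs (z * p) <= z ^ 2 + p ^ 2).
  { rewrite Rabs_mult. assert (Hz := Rabs_pos z). assert (Hp := Rabs_pos p).
    assert (z ^ 2 = Rabs z ^ 2) by (rewrite RPow_abs, Rabs_right; [ring| apply Rle_ge, pow2_ge_0]).
    assert (p ^ 2 = Rabs p ^ 2) by (rewrite RPow_abs, Rabs_right; [ring| apply Rle_ge, pow2_ge_0]).
    nra. }
  assert (H2 : Rabs gg <= k) by (apply Rabs_le; lra).
  assert (H3 := Rabs_pos (z * p)). assert (H4 := Rabs_pos gg).
  assert (0 <= z ^ 2 + p ^ 2) by (assert (0 <= z ^ 2) by apply pow2_ge_0; assert (0 <= p ^ 2) by apply pow2_ge_0; lra).
  nra.
Qed.

Section Sol.
Variables (a b : Rbar) (g : R -> state).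
Hypothesis Hsol : is_KH_solution a b g.

Lemma sol_D t : in_interval a b t ->
  0 < SS (g t) /\
  is_derive (fun u => sx (g u)) t (PX (g t)) /\
  is_derive (fun u => sy (g u)) t (PY (g t)) /\
  is_derive (fun u => sz (g u)) t ((sx (g t) * PY (g t) - sy (g t) * PX (g t)) / 2) /\
  is_derive (fun u => spx (g u)) t (- (PY (g t) * spz (g t) / 2 + sx (g t) * (sx (g t) ^ 2 + sy (g t) ^ 2) / (4 * PI * sqrt (SS (g t)) ^ 3))) /\
  is_derive (fun u => spy (g u)) t (- (- PX (g t) * spz (g t) / 2 + sy (g t) * (sx (g t) ^ 2 + sy (g t) ^ 2) / (4 * PI * sqrt (SS (g t)) ^ 3))) /\
  is_derive (fun u => spz (g u)) t (- (2 * sz (g t) / (PI * sqrt (SS (g t)) ^ 3))).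
Proof.
  intros Ht. destruct Hsol as [_ H]. destruct (H t Ht) as [Ha [H1 [H2 [H3 [H4 [H5 H6]]]]]].
  assert (Hs := away_SS _ Ha).
  rewrite dHpx in H1 by exact Hs. rewrite dHpy in H2 by exact Hs. rewrite dHpz in H3 by exact Hs.
  rewrite dHx in H4 by exact Hs. rewrite dHy in H5 by exact Hs. rewrite dHz in H6 by exact Hs.
  tauto.
Qed.

Lemma ptheta_D t : in_interval a b t -> is_derive (fun u => p_theta (g u)) t 0.
Proof.
  intros Ht. destruct (sol_D t Ht) as [Hs [H1 [H2 [H3 [H4 [H5 H6]]]]]].
  pose proof (G_pt (fun u => sx (g u)) (fun u => sy (g u)) (fun u => spx (g u)) (fun u => spy (g u)) t _ _ _ _ H1 H2 H4 H5) as HD.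
  unfold p_theta. eapply is_derive_eqv; [exact HD|]. match goal with |- ?x = ?y => change (@eq R x y) end; cbv beta; unfold PX, PY; field; split; apply Rgt_not_eq; [exact (sqrt_lt_R0 _ Hs) | exact PI_RGT_0].
Qed.

Hypothesis Hpt0 : forall u, in_interval a b u -> p_theta (g u) = 0.

Definition EE u := sz (g u) ^ 2 + spz (g u) ^ 2.
Definition kk u := (sx (g u) ^ 2 + sy (g u) ^ 2) / 2 + 4 / (PI * sqrt ((sx (g u) ^ 2 + sy (g u) ^ 2) ^ 2 + 16 * sz (g u) ^ 2) ^ 3).

Lemma E_zero t1 t2 : in_interval a b t1 -> in_interval a b t2 -> t1 <= t2 ->
  (EE t1 = 0 -> EE t2 = 0) /\ (EE t2 = 0 -> EE t1 = 0).
Proof.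
  intros H1 H2 H12.
  assert (Hin : forall u, t1 <= u <= t2 -> in_interval a b u)
    by (intros u Hu; apply (interval_convex a b t1 t2); auto).
  assert (Hc : forall c, t1 <= c <= t2 -> continuity_pt kk c).
  { intros c Hc. destruct (sol_D c (Hin c Hc)) as [Hs [D1 [D2 [D3 _]]]].
    destruct (G_k _ _ _ c _ _ _ D1 D2 D3 Hs) as [l Hl].
    exact (cont_of_der _ _ _ Hl). }
  destruct (continuity_ab_maj kk t1 t2 H12 Hc) as [M [HM _]].
  apply (gron EE (fun u => 2 * sz (g u) * ((sx (g u) * PY (g u) - sy (g u) * PX (g u)) / 2)
     + 2 * spz (g u) * (- (2 * sz (g u) / (PI * sqrt (SS (g u)) ^ 3)))) (kk M)); auto.
  - intros u Hu. destruct (sol_D u (Hin u Hu)) as [Hs [D1 [D2 [D3 [D4 [D5 D6]]]]]].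
    pose proof (G_sq _ _ u _ _ D3 D6) as HD. unfold EE.
    eapply is_derive_eqv; [exact HD|]. match goal with |- ?x = ?y => change (@eq R x y) end; cbv beta; field; split; apply Rgt_not_eq; [exact (sqrt_lt_R0 _ Hs) | exact PI_RGT_0].
  - intros u Hu. destruct (sol_D u (Hin u Hu)) as [Hs _].
    assert (Hp := Hpt0 u (Hin u Hu)). unfold p_theta in Hp.
    assert (HQ := sqrt_lt_R0 _ Hs). assert (HPI := PI_RGT_0).
    split. { unfold EE. nra. }
    assert (Heq : 2 * sz (g u) * ((sx (g u) * PY (g u) - sy (g u) * PX (g u)) / 2)
     + 2 * spz (g u) * (- (2 * sz (g u) / (PI * sqrt (SS (g u)) ^ 3))) =
       sz (g u) * spz (g u) * ((sx (g u) ^ 2 + sy (g u) ^ 2) / 2 - 4 / (PI * sqrt (SS (g u)) ^ 3))).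
    { unfold PX, PY. replace (spx (g u)) with (spx (g u)) by reflexivity.
      transitivity (sz (g u) * spz (g u) * ((sx (g u) ^ 2 + sy (g u) ^ 2) / 2 - 4 / (PI * sqrt (SS (g u)) ^ 3)) + sz (g u) * (sx (g u) * spy (g u) - sy (g u) * spx (g u))).
      - field. split; apply Rgt_not_eq; lra.
      - rewrite Hp. ring. }
    rewrite Heq. apply (bnd _ _ _ (kk u)).
    + unfold kk. assert (0 < 4 / (PI * sqrt (SS (g u)) ^ 3)).
      { apply Rdiv_lt_0_compat; [lra| apply Rmult_lt_0_compat; [lra | apply pow_lt; lra]]. }
      unfold SS in H. nra.
    + unfold kk. fold (SS (g u)). assert (0 < 4 / (PI * sqrt (SS (g u)) ^ 3)).
      { apply Rdiv_lt_0_compat; [lra| apply Rmult_lt_0_compat; [lra | apply pow_lt; lra]]. }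
      split; nra.
    + apply HM; exact Hu.
Qed.

End Sol.

Lemma G_lin (F : R -> R) u dF A B : is_derive F u dF ->
  is_derive (fun v => F v - A * v ^ 2 - B * v) u (dF - 2 * A * u - B).
Proof.
  intros HF. auto_derive.
  - eexists; eassumption.
  - rewrite (Deta F u dF HF). ring.
Qed.

Section Sol2.
Variables (a b : Rbar) (g : R -> state) (h : R).
Hypothesis Hsol : is_KH_solution a b g.
Hypothesis HMall : forall u, in_interval a b u -> in_M (g u).
Hypothesis Hh : forall u, in_interval a b u -> KH (g u) = h.

Definition r2 u := sx (g u) ^ 2 + sy (g u) ^ 2.
Definition JJ u := sx (g u) * spx (g u) + sy (g u) * spy (g u).

Lemma M_facts u : in_interval a b u ->
  0 < r2 u /\ sqrt (SS (g u)) = r2 u /\ sz (g u) = 0 /\ spz (g u) = 0 /\ p_theta (g u) = 0.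
Proof.
  intros Hu. destruct (HMall u Hu) as [Hz [Hpz Hpt]].
  destruct (sol_D a b g Hsol u Hu) as [Hs _].
  assert (HS : SS (g u) = r2 u ^ 2) by (unfold SS, r2; rewrite Hz; ring).
  assert (Hr : 0 <= r2 u) by (unfold r2; assert (0 <= sx (g u) ^ 2) by apply pow2_ge_0;
     assert (0 <= sy (g u) ^ 2) by apply pow2_ge_0; lra).
  assert (Hsq : sqrt (SS (g u)) = r2 u) by (rewrite HS; apply sqrt_pow2; exact Hr).
  repeat split; auto.
  destruct Hr as [Hr|Hr]; auto. rewrite HS, <- Hr in Hs. lra.
Qed.

Lemma KH_M u : in_interval a b u ->
  KH (g u) = (spx (g u) ^ 2 + spy (g u) ^ 2) / 2 - 1 / (8 * PI * r2 u).
Proof.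
  intros Hu. destruct (M_facts u Hu) as [Hr [Hsq [Hz [Hpz Hpt]]]].
  unfold KH, PX, PY. fold (SS (g u)). rewrite Hsq, Hpz.
  field. split; apply Rgt_not_eq; [exact Hr | exact PI_RGT_0].
Qed.

Lemma JJ_D u : in_interval a b u -> is_derive JJ u (2 * h).
Proof.
  intros Hu. destruct (M_facts u Hu) as [Hr [Hsq [Hz [Hpz Hpt]]]].
  destruct (sol_D a b g Hsol u Hu) as [Hs [D1 [D2 [D3 [D4 [D5 D6]]]]]].
  pose proof (G_J _ _ _ _ u _ _ _ _ D1 D2 D4 D5) as HD.
  unfold JJ. eapply is_derive_eqv; [exact HD|].
  match goal with |- ?x = ?y => change (@eq R x y) end; cbv beta.
  rewrite <- (Hh u Hu), KH_M by exact Hu.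
  rewrite Hsq. unfold PX, PY. rewrite Hpz. unfold r2 in *.
  field. split; apply Rgt_not_eq; [exact Hr | exact PI_RGT_0].
Qed.

Lemma r2_D u : in_interval a b u -> is_derive r2 u (2 * JJ u).
Proof.
  intros Hu. destruct (M_facts u Hu) as [Hr [Hsq [Hz [Hpz Hpt]]]].
  destruct (sol_D a b g Hsol u Hu) as [Hs [D1 [D2 [D3 [D4 [D5 D6]]]]]].
  pose proof (G_sq _ _ u _ _ D1 D2) as HD.
  unfold r2. eapply is_derive_eqv; [exact HD|].
  match goal with |- ?x = ?y => change (@eq R x y) end; cbv beta.
  unfold JJ, PX, PY. rewrite Hpz. ring.
Qed.

Lemma part2 : exists Q : conic,
        (forall t, in_interval a b t ->
           conic_eval Q t (sqrt (sx (g t) ^ 2 + sy (g t) ^ 2)) = 0) /\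
        (h > 0 -> is_hyperbola Q) /\
        (h < 0 -> is_ellipse Q) /\
        (h = 0 -> is_parabola Q).
Proof.
  destruct (interval_ne a b (proj1 Hsol)) as [ts Hts].
  set (c := JJ ts - 2 * h * ts).
  set (d := r2 ts - 2 * h * ts ^ 2 - 2 * c * ts).
  assert (HJ : forall t, in_interval a b t -> JJ t = 2 * h * t + c).
  { intros t Ht.
    assert (HD0 : forall u, in_interval a b u -> is_derive (fun v => JJ v - 0 * v ^ 2 - (2 * h) * v) u 0).
    { intros u Hu. eapply is_derive_eqv; [apply G_lin, JJ_D, Hu|].
      match goal with |- ?x = ?y => change (@eq R x y) end; ring. }
    assert (E2 := const_on a b _ HD0 ts t Hts Ht).
    simpl in E2. unfold c. lra. }
  assert (Hr : forall t, in_interval a b t -> r2 t = 2 * h * t ^ 2 + 2 * c * t + d).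
  { intros t Ht.
    assert (HD0 : forall u, in_interval a b u -> is_derive (fun v => r2 v - (2 * h) * v ^ 2 - (2 * c) * v) u 0).
    { intros u Hu. eapply is_derive_eqv; [apply G_lin, r2_D, Hu|].
      match goal with |- ?x = ?y => change (@eq R x y) end; rewrite (HJ u Hu); ring. }
    assert (E2 := const_on a b _ HD0 ts t Hts Ht).
    simpl in E2. unfold d. lra. }
  destruct (M_facts ts Hts) as [Hr0 [_ [_ [_ Hpt]]]].
  assert (Hid : JJ ts ^ 2 = 2 * h * r2 ts + 1 / (4 * PI)).
  { rewrite <- (Hh ts Hts), KH_M by exact Hts.
    unfold p_theta in Hpt. unfold JJ.
    replace ((sx (g ts) * spx (g ts) + sy (g ts) * spy (g ts)) ^ 2) with
      (r2 ts * (spx (g ts) ^ 2 + spy (g ts) ^ 2) - (sx (g ts) * spy (g ts) - sy (g ts) * spx (g ts)) ^ 2)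
      by (unfold r2; ring).
    rewrite Hpt. field. split; apply Rgt_not_eq; [exact PI_RGT_0 | exact Hr0]. }
  assert (Hdet : conic_det (mkConic (-2 * h) 0 1 (-2 * c) 0 (-d)) = - (1 / (4 * PI))).
  { unfold conic_det; simpl. unfold d, c. transitivity (2 * h * r2 ts - JJ ts ^ 2); [field | rewrite Hid; field; apply Rgt_not_eq, PI_RGT_0]. }
  assert (Hnz : conic_det (mkConic (-2 * h) 0 1 (-2 * c) 0 (-d)) <> 0).
  { rewrite Hdet. assert (0 < 1 / (4 * PI)) by (apply Rdiv_lt_0_compat; generalize PI_RGT_0; lra).
    intro; lra. }
  assert (Hdisc : conic_disc (mkConic (-2 * h) 0 1 (-2 * c) 0 (-d)) = 8 * h)
    by (unfold conic_disc; simpl; ring).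
  exists (mkConic (-2 * h) 0 1 (-2 * c) 0 (-d)). split; [|split; [|split]].
  - intros t Ht. unfold conic_eval; cbn [cA cB cC cD cE cF].
    assert (Hr1 := proj1 (M_facts t Ht)). fold (r2 t).
    rewrite pow2_sqrt by lra. rewrite (Hr t Ht). ring.
  - intros Hhh. unfold is_hyperbola, is_ellipse, is_parabola. split; [exact Hnz | rewrite Hdisc; lra].
  - intros Hhh. unfold is_hyperbola, is_ellipse, is_parabola. split; [exact Hnz | split; [rewrite Hdisc; lra |]].
    exists ts, (sqrt (r2 ts)). unfold conic_eval; cbn [cA cB cC cD cE cF].
    rewrite pow2_sqrt by lra. rewrite (Hr ts Hts). ring.
  - intros Hhh. unfold is_hyperbola, is_ellipse, is_parabola. split; [exact Hnz | rewrite Hdisc, Hhh; ring].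
Qed.

End Sol2.

Theorem mainTheorem5 :
  (forall (a b : Rbar) (gamma : R -> state),
      is_KH_solution a b gamma ->
      forall t0, in_interval a b t0 -> in_M (gamma t0) ->
      forall t, in_interval a b t -> in_M (gamma t)) /\
  (forall (a b : Rbar) (gamma : R -> state) (h : R),
      is_KH_solution a b gamma ->
      (forall t, in_interval a b t -> in_M (gamma t)) ->
      (forall t, in_interval a b t -> KH (gamma t) = h) ->
      exists Q : conic,
        (forall t, in_interval a b t ->
           conic_eval Q t (sqrt (sx (gamma t) ^ 2 + sy (gamma t) ^ 2)) = 0) /\
        (h > 0 -> is_hyperbola Q) /\
        (h < 0 -> is_ellipse Q) /\
        (h = 0 -> is_parabola Q)).
Proof.
  split.
  - intros a b g Hsol t0 Ht0 [Hz [Hpz Hpt]] t Ht.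
    assert (Hpt0 : forall u, in_interval a b u -> p_theta (g u) = 0).
    { intros u Hu. rewrite (const_on a b _ (ptheta_D a b g Hsol) t0 u Ht0 Hu). exact Hpt. }
    assert (HE0 : EE g t0 = 0) by (unfold EE; rewrite Hz, Hpz; ring).
    assert (HEt : EE g t = 0).
    { destruct (Rle_dec t0 t) as [Hle|Hle].
      - exact (proj1 (E_zero a b g Hsol Hpt0 t0 t Ht0 Ht Hle) HE0).
      - exact (proj2 (E_zero a b g Hsol Hpt0 t t0 Ht Ht0 ltac:(lra)) HE0). }
    unfold EE in HEt.
    assert (0 <= sz (g t) ^ 2) by apply pow2_ge_0.
    assert (0 <= spz (g t) ^ 2) by apply pow2_ge_0.
    split; [|split]; [nra | nra | exact (Hpt0 t Ht)].
  - intros a b g h Hsol HM Hh. exact (part2 a b g h Hsol HM Hh).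
Qed.
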